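(* For any $J\in\mathbb{N}^+$, $h\ge0$ and any lattice points $y_1\neq y_2$ in $\mathbb{Z}^d$, $\mathsf{F}^{y_1}_J\cap\mathsf{F}^{y_2}_J=\emptyset$.
   Context: $\widetilde{\mathbb{Z}}^d$ ($d\ge3$) is the metric graph of $\mathbb{Z}^d$ (each nearest-neighbor edge replaced by a compact interval of length $d$), and $\widetilde{\mathcal{L}}_{1/2}$ is the loop soup on it (Poisson point process of continuous loops with intensity $\frac12\widetilde\mu$, $\widetilde\mu$ the Brownian loop measure of Lupu). A fundamental loop is a loop whose range contains at least two lattice points. Connections $\leftrightarrow$ are via continuous paths in the union of ranges of loops of the soup (or nonempty intersection); $\nleftrightarrow$ is the negation; $\mathbf{C}(x)$ is the cluster of $x$. The ghost field: i.i.d. $\{0,1\}$-valued $\mathscr{G}^h_x$, $x\in\mathbb{Z}^d$, independent of the soup, with $\mathbb{P}(\mathscr{G}^h_x=0)=e^{-h}$; $\mathcal{G}^h=\{x:\mathscr{G}^h_x=1\}$. For $x\in\mathbb{Z}^d$, $i\in\mathbb{N}^+$, $x_i^{\pm}=x\pm(i,0,\dots,0)$, and $A_J^x=\bigcup_{i=1}^J\{x_i^+,x_i^-\}\cup\{x\}$. For $A\subset\mathbb{Z}^d$, $\gamma^{\mathrm f}_A$ is the union of ranges of fundamental loops of $\widetilde{\mathcal{L}}_{1/2}$ that visit every point of $A$ and no other lattice point. For distinct $x,y,z$, $\mathsf{E}(x,y,z)$ is the event that (1) $\mathbf{0}\leftrightarrow x$ and $\mathbf{0}\nleftrightarrow\mathcal{G}^h$;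 (2) $y\leftrightarrow\mathcal{G}^h$ and $z\leftrightarrow\mathcal{G}^h$; (3) $\mathbf{C}(x),\mathbf{C}(y),\mathbf{C}(z)$ are pairwise disjoint. $\mathsf{E}^x_J=\mathsf{E}(x,x_J^-,x_J^+)$. $\mathsf{F}^x_J$ is the event that $\gamma^{\mathrm f}_{A_J^x}\neq\emptyset$ and that, after deleting from $\widetilde{\mathcal{L}}_{1/2}$ all loops composing $\gamma^{\mathrm f}_{A_J^x}$, the event $\mathsf{E}^x_J$ occurs. *)

(* Defs.v *)
From HB Require Import structures.
From mathcomp Require Import all_boot all_order all_algebra.
From mathcomp Require Import all_classical all_reals all_analysis.
Set Implicit Arguments. Unset Strict Implicit. Unset Printing Implicit Defensive.
Import Order.TTheory GRing.Theory Num.Theory.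
Import numFieldNormedType.Exports.
Local Open Scope classical_set_scope.
Local Open Scope ring_scope.

Section MetricGraph.
Variables (R : realType) (d : nat).

Definition lat := 'I_d -> int.

(* x + k e_1 ; x_i^+ = shift x i, x_i^- = shift x (-i). *)
Definition shift (x : lat) (k : int) : lat :=
  fun j => x j + (if val j == 0%N then k else 0).

Definition Aset (x : lat) (J : nat) : set lat :=
  [set y | exists k : int, (`|k| <= J%:Z)%R /\ y = shift x k].

(* The metric graph \tilde Z^d realised in R^d: edges have Euclidean
   length d; lattice point x sits at d*x. *)
Definition emb (x : lat) : 'rV[R]_d := \row_i (d%:R * (x i)%:~R).

Definition in_dZ (r : R) := exists z : int, r = d%:R * z%:~R.

Definition metric_graph : set 'rV[R]_d :=
  [set v | forall i j : 'I_d, i != j -> in_dZ (v ord0 i) \/ in_dZ (v ord0 j)].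

Record loop := Loop {
  lT : R;
  lT_gt0 : 0 < lT;
  lpath : R -> 'rV[R]_d;
  lcont : {within [set t | 0 <= t <= lT], continuous lpath};
  lclosed : lpath 0 = lpath lT;
  lin_graph : forall t, 0 <= t <= lT -> metric_graph (lpath t) }.

Definition range (l : loop) : set 'rV[R]_d :=
  lpath l @` [set t | 0 <= t <= lT l].

Definition latpts (l : loop) : set lat := [set x | range l (emb x)].

Definition fundamental (l : loop) : Prop :=
  exists x y, x <> y /\ latpts l x /\ latpts l y.

Definition soup_range (I : Type) (L : I -> loop) (K : set I) : set 'rV[R]_d :=
  \bigcup_(i in K) range (L i).

Definition conn (U : set 'rV[R]_d) (a b : 'rV[R]_d) : Prop :=
  a = b \/ exists f : R -> 'rV[R]_d,
    {within [set t | 0 <= t <= 1], continuous f} /\ f 0 = a /\ f 1 = b /\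
    (forall t, 0 <= t <= 1 -> U (f t)).

Definition connG (U : set 'rV[R]_d) (a : 'rV[R]_d) (G : set lat) : Prop :=
  exists g, G g /\ conn U a (emb g).

Definition cluster (U : set 'rV[R]_d) (a : 'rV[R]_d) : set 'rV[R]_d :=
  [set v | conn U a v].

(* The event E(x,y,z) for the configuration with range U and ghost set G. *)
Definition Eevt (U : set 'rV[R]_d) (G : set lat) (x y z : lat) : Prop :=
  [/\ conn U (emb (fun _ => 0)) (emb x) /\ ~ connG U (emb (fun _ => 0)) G,
      connG U (emb y) G /\ connG U (emb z) G &
      [/\ cluster U (emb x) `&` cluster U (emb y) = set0,
          cluster U (emb x) `&` cluster U (emb z) = set0 &
          cluster U (emb y) `&` cluster U (emb z) = set0]].

Definition EJ (U : set 'rV[R]_d) (G : set lat) (x : lat) (J : nat) : Prop :=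
  Eevt U G x (shift x (- J%:Z)) (shift x J%:Z).

Definition composes (I : Type) (L : I -> loop) (A : set lat) : set I :=
  [set i | fundamental (L i) /\ latpts (L i) = A].

Definition gammaf (I : Type) (L : I -> loop) (A : set lat) : set 'rV[R]_d :=
  soup_range L (composes L A).

Definition FJ (I : Type) (L : I -> loop) (G : set lat) (x : lat) (J : nat) : Prop :=
  gammaf L (Aset x J) <> set0 /\
  EJ (soup_range L (~` composes L (Aset x J))) G x J.

End MetricGraph.

(* Main.v *)
Require Import Defs.
From HB Require Import structures.
From mathcomp Require Import all_boot all_order all_algebra.
From mathcomp Require Import all_classical all_reals all_analysis.
From mathcomp Require Import lra zify.
Import Order.TTheory GRing.Theory Num.Theory.
Import numFieldNormedType.Exports.
Local Open Scope classical_set_scope.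
Local Open Scope ring_scope.

Lemma within_comp (R : realType) (U : topologicalType) (A : set R)
  (f : R -> U) (c : R -> R) :
  (forall x, A (c x)) -> continuous c -> {within A, continuous f} ->
  continuous (f \o c).
Proof.
move=> cA cc cf x.
have := cf (c x); rewrite /continuous_at.
have [_ |] := nbhs_subspaceP A (c x); last by move/(_ (cA x)).
move=> H; apply: cvg_comp H.
move=> P /=; rewrite /within /= => HP.
have HH : nbhs x (fun z => A (c z) -> P (c z)) := cc x _ HP. by apply: (filterS _ HH) => y /=; apply; exact: cA. Qed.


Lemma aff_cont (R : realType) (k c : R) : continuous (fun s : R => s * k + c).
Proof.
move=> x.
apply: (@continuousD _ _ _ (fun s : R => s * k) (cst c)); last exact: cvg_cst.
apply: (@continuousM _ _ id (cst k)); [exact: cvg_id | exact: cvg_cst].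
Qed.

Definition clamp (R : realType) (a b t : R) := Num.max a (Num.min b t).
Arguments clamp {R}.

Lemma clamp_cont (R : realType) (a b : R) : continuous (clamp a b).
Proof.
have -> : clamp a b = (fun _ : R => a) \max (fun t => Num.min b t) by [].
apply: max_fun_continuous; first exact: cst_continuous.
have -> : (fun t : R => Num.min b t) = (fun _ : R => b) \min id by [].
apply: min_fun_continuous; first exact: cst_continuous.
by move=> x; exact: cvg_id.
Qed.

Lemma clamp_in (R : realType) (a b t : R) : a <= b -> a <= clamp a b t <= b.
Proof.
move=> ab; rewrite /clamp; apply/andP; split; first by rewrite le_max lexx.
rewrite ge_max ab /=; by rewrite ge_min lexx.
Qed.

Lemma clamp_id (R : realType) (a b t : R) : a <= t <= b -> clamp a b t = t.
Proof.
move=> /andP[hta htb]; rewrite /clamp.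
have -> : Num.min b t = t by rewrite min_r.
by rewrite max_r.
Qed.

Lemma clamp_lo (R : realType) (a b t : R) : a <= b -> t <= a -> clamp a b t = a.
Proof.
move=> ab ta; rewrite /clamp.
have -> : Num.min b t = t by rewrite min_r // (le_trans ta ab).
by rewrite max_l.
Qed.

Lemma clamp_hi (R : realType) (a b t : R) : a <= b -> b <= t -> clamp a b t = b.
Proof.
move=> ab bt; rewrite /clamp.
have -> : Num.min b t = b by rewrite min_l.
by rewrite max_r.
Qed.

Arguments within_comp {R U A f c}.
Arguments clamp_in {R a b} t. Arguments clamp_cont {R}. Arguments clamp_id {R a b t}. Arguments aff_cont {R}.
Set Implicit Arguments. Unset Strict Implicit. Unset Printing Implicit Defensive.
Section Paths.
Variables (R : realType) (d : nat).
Implicit Types (U V : set 'rV[R]_d).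

Lemma path_sub U (g : R -> 'rV[R]_d) (a b t0 t1 : R) :
  a <= b -> {within [set t | a <= t <= b], continuous g} ->
  (forall t, a <= t <= b -> U (g t)) -> a <= t0 <= b -> a <= t1 <= b ->
  conn U (g t0) (g t1).
Proof.
move=> ab gc gU h0 h1; right.
exists (fun s => g (clamp a b (s * (t1 - t0) + t0))).
split.
  apply: continuous_subspaceT.
  have H := within_comp (fun x => clamp_in x ab) (clamp_cont a b) gc.
  move=> x.
  exact: (continuous_comp (aff_cont (t1 - t0) t0 x) (H _)).
split; first by rewrite mul0r add0r clamp_id.
split; first by rewrite mul1r subrK clamp_id.
move=> s /andP[s0 s1].
have hs : a <= s * (t1 - t0) + t0 <= b.
  move: h0 h1 => /andP[h0a h0b] /andP[h1a h1b].
  apply/andP; split; nra.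
by rewrite clamp_id //; apply: gU.
Qed.

Lemma conn_sym U a b : conn U a b -> conn U b a.
Proof.
case=> [->|[f [fc [f0 [f1 fU]]]]]; first by left.
rewrite -f0 -f1; apply: (@path_sub U f 0 1 1 0) => //.
  by rewrite ler01 lexx.
by rewrite lexx ler01.
Qed.

Lemma conn_trans U a b c : conn U a b -> conn U b c -> conn U a c.
Proof.
case=> [->//|[f [fc [f0 [f1 fU]]]]].
case=> [<-|[g [gc [g0 [g1 gU]]]]]; first by right; exists f.
have l01 : (0 : R) <= 1 by rewrite ler01.
have Fc := within_comp (fun x => clamp_in x l01) (clamp_cont 0 1) fc.
have Gc := within_comp (fun x => clamp_in x l01) (clamp_cont 0 1) gc.
right.
exists (fun s => (f \o clamp 0 1) (s * 2 + 0) + (g \o clamp 0 1) (s * 2 + -1) - b).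
split.
  apply: continuous_subspaceT => x.
  have HD := continuousD (continuous_comp (aff_cont 2 0 x) (Fc _))
    (continuous_comp (aff_cont 2 (-1) x) (Gc _)).
  have HC : {for x, continuous (fun _ : R => b)} by exact: cvg_cst.
  exact: (continuousB HD HC).
split.
  rewrite /=.
  have -> : (0:R) * 2 + 0 = 0 by rewrite mul0r addr0.
  have -> : (0:R) * 2 - 1 = -1 by rewrite mul0r add0r.
  rewrite (@clamp_id _ 0 1 0); last by lra.
  rewrite (@clamp_lo _ 0 1 (-1)); [|lra|lra].
  by rewrite f0 g0 addrK.
split.
  rewrite /=.
  have -> : (1:R) * 2 + 0 = 2 by rewrite mul1r addr0.
  have -> : (1:R) * 2 - 1 = 1 by rewrite mul1r -[2]/(1 + 1) addrK.
  rewrite (@clamp_hi _ 0 1 2); [|lra|lra].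
  rewrite (@clamp_id _ 0 1 1); last by lra.
  by rewrite f1 g1 addrAC subrr add0r.
move=> s /andP[s0 s1] /=.
have [hs|hs] := leP (s * 2) 1.
  rewrite (@clamp_lo _ 0 1 (s * 2 - 1)); [|lra|lra].
  rewrite g0 addrK (@clamp_id _ 0 1 (s * 2 + 0)); last by lra.
  by apply: fU; apply/andP; split; lra.
rewrite (@clamp_hi _ 0 1 (s * 2 + 0)); [|lra|lra].
rewrite f1 addrAC subrr add0r (@clamp_id _ 0 1 (s * 2 - 1)); last by lra.
by apply: gU; apply/andP; split; lra.
Qed.

Lemma conn_mono U V a b : U `<=` V -> conn U a b -> conn V a b.
Proof.
move=> UV; case=> [->|[f [fc [f0 [f1 fU]]]]]; first by left.
by right; exists f; split=> //; split=> //; split=> // t /fU /UV.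
Qed.

End Paths.

Section Comb.
Variables (R : realType) (d : nat) (I : Type) (L : I -> loop R d).

Lemma soup_mono (K K' : set I) : K `<=` K' -> soup_range L K `<=` soup_range L K'.
Proof. by move=> KK p [i Ki rp]; exists i => //; apply: KK. Qed.

Lemma loop_conn (K : set I) i p q : K i -> Defs.range (L i) p -> Defs.range (L i) q ->
  conn (soup_range L K) p q.
Proof.
move=> Ki [t0 ht0 <-] [t1 ht1 <-].
apply: (@path_sub _ _ _ (lpath (L i)) 0 (lT (L i))) => //.
- exact: ltW (lT_gt0 (L i)).
- exact: lcont.
- by move=> t ht; exists i => //; exists t.
Qed.

Lemma split_conn (C1 C2 : set I) a b : conn (soup_range L (~` C1)) a b ->
  conn (soup_range L (~` C1 `&` ~` C2)) a b \/
  exists i, C2 i /\ exists p, Defs.range (L i) p /\ conn (soup_range L (~` C1)) a p.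
Proof.
case=> [->|[f [fc [f0 [f1 fU]]]]]; first by left; left.
have [allV|notall] := pselect (forall t, 0 <= t <= 1 ->
    soup_range L (~` C1 `&` ~` C2) (f t)).
  by left; right; exists f.
right.
have /existsNP [t /not_implyP [ht nV]] := notall.
have [i Ci rt] := fU t ht.
exists i; split.
  apply: contrapT => nC2; apply: nV; exists i => //; split => //.
exists (f t); split => //.
rewrite -f0; apply: (@path_sub _ _ _ f 0 1).
- by rewrite ler01.
- exact: fc.
- exact: fU.
- by rewrite lexx ler01.
- exact: ht.
Qed.

End Comb.

Lemma shift0 (d : nat) (x : lat d) : Defs.shift x 0 = x.
Proof. by apply: funext => j; rewrite /Defs.shift if_same addr0. Qed.

Lemma Aset_self (d : nat) (x : lat d) J : Aset x J x.
Proof. by exists 0; split; [rewrite normr0 | rewrite shift0]. Qed.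

Lemma Aset_p (d : nat) (x : lat d) (J : nat) : Aset x J (Defs.shift x J%:Z).
Proof. by exists J%:Z; split. Qed.

Lemma Aset_m (d : nat) (x : lat d) (J : nat) : Aset x J (Defs.shift x (- J%:Z)).
Proof. by exists (- J%:Z); split => //; rewrite normrN. Qed.

Lemma Aset_neq (d : nat) (J : nat) (y1 y2 : lat d) : (0 < d)%N ->
  y1 <> y2 -> Aset y1 J <> Aset y2 J.
Proof.
move=> hd hy E.
pose i0 : 'I_d := Ordinal hd.
have : Aset y2 J y1 by rewrite -E; exact: Aset_self.
have : Aset y2 J (Defs.shift y1 J%:Z) by rewrite -E; exact: Aset_p.
have : Aset y2 J (Defs.shift y1 (- J%:Z)) by rewrite -E; exact: Aset_m.
move=> [k2 [hk2 e2]] [k1 [hk1 e1]] [k [hk e]].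
have := congr1 (fun f => f i0) e2; have := congr1 (fun f => f i0) e1.
have := congr1 (fun f => f i0) e.
rewrite /Defs.shift /= => q q1 q2.
move: hk hk1 hk2; rewrite !ler_norml => /andP[ka kb] /andP[k1a k1b] /andP[k2a k2b].
have k0 : k = 0 by lia.
by apply: hy; rewrite e k0 shift0.
Qed.

Section Key.
Variables (R : realType) (d : nat) (I : Type) (L : I -> loop R d).

Lemma comp_disj (A1 A2 : set (lat d)) i : A1 <> A2 ->
  composes L A1 i -> ~ composes L A2 i.
Proof. by move=> hA [_ h1] [_ h2]; apply: hA; rewrite -h1 -h2. Qed.

Lemma gammaf_ex (A : set (lat d)) : gammaf L A <> set0 -> exists i, composes L A i.
Proof.
move=> ne; case: (pselect (exists i, composes L A i)) => // nC.
exfalso; apply: ne; apply/seteqP; split => // p [i Ci _].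
by apply: nC; exists i.
Qed.

Lemma in_range (A : set (lat d)) i x : composes L A i -> A x ->
  Defs.range (L i) (emb R x).
Proof. by move=> [_ hi] Ax; have : latpts (L i) x by rewrite hi. Qed.

Lemma key (G : set (lat d)) (J : nat) (y1 y2 : lat d) :
  Aset y1 J <> Aset y2 J -> FJ L G y1 J -> FJ L G y2 J ->
  connG (soup_range L (~` composes L (Aset y2 J))) (emb R y1) G.
Proof.
move=> hA [ne1 E1] [ne2 _].
have [i1 C1i1] := gammaf_ex ne1.
move: E1 => [[c0 nc0] [[gm [Gm cm]] [gp [Gp cp]]] [_ _ d3]].
have sub : forall z g, Aset y1 J z ->
    conn (soup_range L (~` composes L (Aset y1 J))) (emb R z) (emb R g) ->
    conn (soup_range L (~` composes L (Aset y2 J))) (emb R z) (emb R g) \/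
    conn (soup_range L (~` composes L (Aset y1 J))) (emb R z) (emb R y2).
  move=> z g _ /(split_conn (composes L (Aset y2 J))) [hV|[i [C2i [q [rq cq]]]]].
    by left; apply: conn_mono hV; apply: soup_mono => j [].
  right; apply: conn_trans cq _.
  apply: loop_conn rq _.
    exact: (comp_disj (nesym hA) C2i).
  exact: (in_range C2i (Aset_self _ _)).
have finish : forall z g, Aset y1 J z -> G g ->
    conn (soup_range L (~` composes L (Aset y2 J))) (emb R z) (emb R g) ->
    connG (soup_range L (~` composes L (Aset y2 J))) (emb R y1) G.
  move=> z g Az Gg czg; exists g; split => //.
  apply: conn_trans czg.
  apply: loop_conn.
  - exact: (comp_disj hA C1i1).
  - exact: (in_range C1i1 (Aset_self _ _)).
  - exact: (in_range C1i1 Az).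
case: (sub _ _ (Aset_m _ _) cm) => [h|hm]; first exact: finish (Aset_m _ _) Gm h.
case: (sub _ _ (Aset_p _ _) cp) => [h|hp]; first exact: finish (Aset_p _ _) Gp h.
have cmp := conn_trans hm (conn_sym hp).
have : (Defs.cluster (soup_range L (~` composes L (Aset y1 J))) (emb R (Defs.shift y1 (- J%:Z)))
   `&` Defs.cluster (soup_range L (~` composes L (Aset y1 J))) (emb R (Defs.shift y1 J%:Z)))
   (emb R (Defs.shift y1 J%:Z)) by split => //; left.
by rewrite d3.
Qed.

End Key.

Theorem lemma9p3 (R : realType) (d : nat) (hd : (3 <= d)%N)
  (J : nat) (hJ : (0 < J)%N) (h : R) (hh : 0 <= h)
  (I : Type) (L : I -> loop R d) (G : set (lat d))
  (y1 y2 : lat d) (hy : y1 <> y2) :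
  ~ (FJ L G y1 J /\ FJ L G y2 J).
Proof.
move=> [F1 F2].
have hd0 : (0 < d)%N by apply: leq_trans hd.
have A12 := @Aset_neq d J y1 y2 hd0 hy.
have k1 := key A12 F1 F2.
have k2 := key (nesym A12) F2 F1.
move: F1 F2 => [ne1 [[c01 nc01] _ _]] [ne2 [[c02 nc02] _ _]].
case: (split_conn (composes L (Aset y1 J)) c02) => [hV|[i [C1i [q [rq cq]]]]].
  apply: nc01; move: k2 => [g [Gg cg]]; exists g; split => //.
  apply: conn_trans cg.
  by apply: conn_mono hV; apply: soup_mono => j [].
apply: nc02; move: k1 => [g [Gg cg]]; exists g; split => //.
apply: conn_trans cg; apply: conn_trans cq _.
apply: loop_conn rq _.
  exact: (comp_disj A12 C1i).
exact: (in_range C1i (Aset_self _ _)).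
Qed.
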